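(* There exists a test.
   Context: Let $\varphi:\omega\to\omega^2$ be the bijection with inverse $\langle n,p\rangle:=\varphi^{-1}(n,p)=\left(\sum_{k\leq n+p}k\right)+p$, and write $\varphi(q)=((q)_0,(q)_1)$. A set $E\subseteq\bigcup_{q\in\omega}2^q\times 2^q$ is a test if: (a) for each $q\in\omega$ there is a unique $(s_q,t_q)\in E\cap(2^q\times 2^q)$; (b) for all $m,p\in\omega$ and $u\in 2^{<\omega}$ there is $v\in 2^{<\omega}$ with $(s_p0uv,t_p1uv)\in E$ and $(|t_p1uv|-1)_0=m$; (c) for each $n>0$ there are $q<n$ and $w\in 2^{<\omega}$ with $s_n=s_q0w$ and $t_n=t_q1w$. (Juxtaposition denotes concatenation of finite binary sequences.) *)

(* Defs.v *)
From mathcomp Require Import all_boot.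
Set Implicit Arguments. Unset Strict Implicit. Unset Printing Implicit Defensive.

(* Finite binary sequences 2^{<omega} are represented as [seq bool];
   0 is [false], 1 is [true]; juxtaposition is [++]. *)

(* The pairing <n,p> = (sum_{k <= n+p} k) + p, i.e. phi^{-1}. *)
Definition cpair (n p : nat) : nat := (\sum_(0 <= k < (n + p).+1) k) + p.

(* (q)_0 = m  iff  phi(q) = (m, p) for some p, i.e. q = <m,p> for some p. *)
Definition phi0_is (q m : nat) : Prop := exists p, cpair m p = q.

Definition test (E : seq bool * seq bool -> Prop) : Prop :=
  (forall s t, E (s, t) -> size s = size t) /\
  (forall q, exists s t, [/\ E (s, t), size s = q, size t = q &
       forall s' t', E (s', t') -> size s' = q -> size t' = q -> s' = s /\ t' = t]) /\
  (forall (m p : nat) (u : seq bool) sp tp,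
      E (sp, tp) -> size sp = p -> size tp = p ->
      exists v : seq bool,
        E (sp ++ false :: u ++ v, tp ++ true :: u ++ v) /\
        phi0_is (size (tp ++ true :: u ++ v) - 1) m) /\
  (forall (n : nat) sn tn, 0 < n -> E (sn, tn) -> size sn = n -> size tn = n ->
      exists (q : nat) (w : seq bool) sq tq,
        [/\ q < n, E (sq, tq), size sq = q, size tq = q &
            (sn = sq ++ false :: w /\ tn = tq ++ true :: w)]).

(* Main.v *)
Require Import Defs.
From mathcomp Require Import all_boot.
From Stdlib Require Import ClassicalEpsilon.
From mathcomp Require Import zify.
Set Implicit Arguments. Unset Strict Implicit. Unset Printing Implicit Defensive.

Definition Tr (s : nat) := \sum_(0 <= i < s.+1) i.

Lemma TrS s : Tr s.+1 = Tr s + s.+1.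
Proof. by rewrite /Tr big_nat_recr. Qed.

Lemma Tr_ge s : s <= Tr s.
Proof. by case: s => // s; rewrite TrS leq_addl. Qed.

Lemma Tr_lt s s' : s < s' -> Tr s + s < Tr s'.
Proof.
elim: s' => // s' IH; rewrite ltnS leq_eqVlt => /orP [/eqP -> | H].
  by rewrite TrS ltn_add2l.
rewrite TrS; apply: (leq_trans (IH H)); apply: leq_addr.
Qed.

Lemma cpairE m p : cpair m p = Tr (m + p) + p.
Proof. by []. Qed.

Lemma cpair_inj m k m' k' : cpair m k = cpair m' k' -> m = m' /\ k = k'.
Proof.
rewrite !cpairE => E.
have [lt|gt|eq] := ltngtP (m + k) (m' + k').
- have := Tr_lt lt; move: E; clear; lia.
- have := Tr_lt gt; move: E; clear; lia.
- rewrite eq in E; move/addnI: E => ek; subst k'.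
  by move/addIn: eq.
Qed.

Lemma cpair_ge m k : k <= cpair m k.
Proof. by rewrite cpairE leq_addl. Qed.

Definition dec (n : nat) : nat * nat :=
  epsilon (inhabits (0, 0)) (fun ab => cpair ab.1 ab.2 = n).

Lemma dec_spec m k : dec (cpair m k) = (m, k).
Proof.
have := @epsilon_spec (nat * nat) (inhabits (0, 0)) (fun ab => cpair ab.1 ab.2 = cpair m k).
rewrite -/(dec _) => H.
have /H : exists x : nat * nat, cpair x.1 x.2 = cpair m k by exists (m, k).
case: (dec _) => a b /= /cpair_inj [-> ->] //.
Qed.

Definition T3 := ((nat * seq bool) * nat)%type.

Definition gk (k : nat) : option (nat * seq bool) :=
  omap fst (@unpickle T3 k).

Definition sel (n : nat) : nat * seq bool :=
  let k := (dec n.-1).2 in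
  match gk k with
  | Some (p, u) => if p + size u < n then (p, u ++ nseq (n - p - size u - 1) false)
                   else (n.-1, [::])
  | None => (n.-1, [::])
  end.

Lemma sel_spec n : 0 < n -> (sel n).1 < n /\ size (sel n).2 = n - (sel n).1 - 1.
Proof.
move=> n0; rewrite /sel; case: (gk _) => [[p u]|].
  case: ifP => H /=.
    split; first by apply: leq_ltn_trans H; apply: leq_addr.
    rewrite size_cat size_nseq; move: H; clear; lia.
  by split => //=; move: n0; clear; lia.
by split => //=; move: n0; clear; lia.
Qed.

Definition d0 : seq bool * seq bool := ([::], [::]).

Definition step n (h : seq (seq bool * seq bool)) :=
  let q := (sel n).1 in let w := (sel n).2 in
  ((nth d0 h q).1 ++ false :: w, (nth d0 h q).2 ++ true :: w).

Fixpoint hist (n : nat) : seq (seq bool * seq bool) :=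
  match n with
  | 0 => [:: d0]
  | n'.+1 => rcons (hist n') (step n'.+1 (hist n'))
  end.

Lemma size_hist n : size (hist n) = n.+1.
Proof. by elim: n => //= n IH; rewrite size_rcons IH. Qed.

Definition P n := nth d0 (hist n) n.

Lemma histP n i : i <= n -> nth d0 (hist n) i = P i.
Proof.
elim: n => [|n IH]; first by rewrite leqn0 => /eqP ->.
rewrite leq_eqVlt => /orP [/eqP -> //| H].
by rewrite /= nth_rcons size_hist H IH.
Qed.

Lemma PS n : P n.+1 = step n.+1 (hist n).
Proof. by rewrite /P /= nth_rcons size_hist ltnn eqxx. Qed.

Lemma Prec n : 0 < n ->
  P n = ((P (sel n).1).1 ++ false :: (sel n).2, (P (sel n).1).2 ++ true :: (sel n).2).
Proof.
case: n => // n _; rewrite PS /step histP //.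
by have [] := sel_spec (ltn0Sn n).
Qed.

Lemma size_P n : size (P n).1 = n /\ size (P n).2 = n.
Proof.
elim/ltn_ind: n => n IH.
case: n IH => [|n] IH; first by [].
have [lt sz] := sel_spec (ltn0Sn n).
rewrite Prec // /= !size_cat /= sz.
have [-> ->] := IH _ lt. move: lt; clear; lia.
Qed.

Lemma inj_unbounded (f : nat -> nat) : injective f -> forall N, exists j, N <= f j.
Proof.
move=> fi N.
have [/hasP [j _ H]|/hasPn H] := boolP (has (fun j => N <= f j) (iota 0 N.+1)); first by exists j.
exfalso.
have U : uniq (map f (iota 0 N.+1)) by rewrite map_inj_uniq // iota_uniq.
have S : {subset map f (iota 0 N.+1) <= iota 0 N}.
  move=> x /mapP [j jin ->]; rewrite mem_iota add0n /=.
  by rewrite ltnNge; apply: H.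
have := uniq_leq_size U S; by rewrite size_map !size_iota ltnn.
Qed.

Definition E (st : seq bool * seq bool) : Prop := exists n, st = P n.

Lemma E_eq s t n : E (s, t) -> size s = n -> (s, t) = P n.
Proof.
move=> [n' e] sz; have [h _] := size_P n'.
rewrite e; congr P; rewrite -sz -h; by move: e => /(congr1 fst) /= ->.
Qed.

Theorem lemma3p3 : exists E : seq bool * seq bool -> Prop, test E.
Proof.
exists E; split; [|split; [|split]].
- move=> s t [n e]; have [h1 h2] := size_P n.
  have [-> ->] : s = (P n).1 /\ t = (P n).2 by move: e; case: (P n) => a b [-> ->].
  by rewrite h1 h2.
- move=> q; exists (P q).1, (P q).2; have [h1 h2] := size_P q.
  split => //; first by exists q; case: (P q).
  move=> s' t' Es' sz _; move: (E_eq Es' sz); case: (P q) => a b [-> ->] //.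
- move=> m p u sp tp Esp szp _.
  have ep := E_eq Esp szp.
  have fi : injective (fun j => @pickle T3 ((p, u), j)).
    by move=> a b /(pcan_inj (@pickleK T3)) [].
  have [j Hj] := inj_unbounded fi (p + size u).
  set k := pickle _ in Hj.
  set n := (cpair m k).+1.
  have gkk : gk k = Some (p, u) by rewrite /gk /k pickleK.
  have lt : p + size u < n by rewrite ltnS; apply: leq_trans Hj (cpair_ge _ _).
  have sn : sel n = (p, u ++ nseq (n - p - size u - 1) false).
    by rewrite /sel /= dec_spec /= gkk lt.
  exists (nseq (n - p - size u - 1) false).
  have PE := Prec (ltn0Sn (cpair m k)). rewrite -/n sn /= -ep /= in PE.
  split; first by exists n; rewrite PE.
  have [_ h2] := size_P n.
  have -> : tp ++ true :: u ++ nseq (n - p - size u - 1) false = (P n).2 by rewrite PE.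
  by rewrite h2 subn1 /=; exists k.
- move=> n sn tn n0 En szn _.
  have e := E_eq En szn.
  have [lt _] := sel_spec n0.
  exists (sel n).1, (sel n).2, (P (sel n).1).1, (P (sel n).1).2.
  have [h1 h2] := size_P (sel n).1.
  split => //; first by exists (sel n).1; case: (P _).
  by move: e; rewrite Prec // => -[-> ->].
Qed.
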